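(* Let $E$ be a graph, $S\subseteq R(E)$ and $K$ a field with involution. Define the graph $E_S$ by $E_S^0=E^0\cup\{v':v\in R(E)\setminus S\}$ and $E_S^1=E^1\cup\{e':e\in E^1,\ \mathbf{r}(e)\in R(E)\setminus S\}$ (new symbols $v'$, $e'$), where $\mathbf{s},\mathbf{r}$ agree with those of $E$ on $E^1$, and $\mathbf{s}(e')=\mathbf{s}(e)$, $\mathbf{r}(e')=\mathbf{r}(e)'$. Define $\phi$ on vertices of $E_S$ by $\phi(v)=v$ if $v\notin R(E)\setminus S$, $\phi(v)=\sum_{e\in\mathbf{s}^{-1}(v)}ee^*$ if $v\in R(E)\setminus S$, and $\phi(v')=v-\sum_{e\in\mathbf{s}^{-1}(v)}ee^*$ for $v\in R(E)\setminus S$; on edges by $\phi(e)=e\,\phi(\mathbf{r}(e))$ for $e\in E^1$ and $\phi(e')=e\,\phi(\mathbf{r}(e)')$; and on ghost edges by $\phi(f^* )=\phi(f)^*$ for $f\in E_S^1$ (all values in $CL_K(E,S)$). Then $\phi$ extends uniquely to a $K$-algebra $*$-isomorphism $\phi:L_K(E_S)\to CL_K(E,S)$.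
   Context: A (directed) graph $E=(E^0,E^1,\mathbf{s},\mathbf{r})$ has vertex set $E^0$, edge set $E^1$, source and range maps; no finiteness or countability is assumed. Paths are vertices or sequences $e_1\cdots e_n$ of edges with $\mathbf{r}(e_i)=\mathbf{s}(e_{i+1})$. A vertex $v$ is regular if $\mathbf{s}^{-1}(v)$ is nonempty and finite; $R(E)$ is the set of regular vertices. $K$ has an arbitrary involution $a\mapsto a^*$. For $S\subseteq R(E)$, $CL_K(E,S)$ is the free $K$-algebra generated by $E^0\cup E^1\cup\{e^*:e\in E^1\}$ subject to (V) $vw=\delta_{v,w}v$; (E1) $\mathbf{s}(e)e=e\mathbf{r}(e)=e$; (E2) $\mathbf{r}(e)e^*=e^*\mathbf{s}(e)=e^*$; (CK1) $e^*f=\delta_{e,f}\mathbf{r}(e)$; (SCK2) $v=\sum_{e\in\mathbf{s}^{-1}(v)}ee^*$ for $v\in S$; and $L_K(F)=CL_K(F,R(F))$ for any graph $F$. These are involutive $K$-algebras via $(\sum a_ip_iq_i^* )^*=\sum a_i^*q_ip_i^*$, where $p^*=e_n^*\cdots e_1^*$, $v^*=v$. A $*$-isomorphism is an algebra isomorphism $f$ with $f(x^* )=f(x)^*$. *)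

(* Defs.v *)
From HB Require Import structures.
From mathcomp Require Import all_boot all_order all_algebra.
From Stdlib Require List.
From Stdlib Require Import ClassicalEpsilon.
Set Implicit Arguments. Unset Strict Implicit. Unset Printing Implicit Defensive.
Import GRing.Theory.
Local Open Scope ring_scope.

Record graph := Graph {
  vertex : Type;
  edge : Type;
  src : edge -> vertex;
  rng : edge -> vertex }.

Definition enumerates (E : graph) (v : vertex E) (l : seq (edge E)) : Prop :=
  List.NoDup l /\ (forall e, List.In e l <-> src e = v).

Definition regular (E : graph) (v : vertex E) : Prop :=
  exists l : seq (edge E), l <> [::] /\ enumerates v l.

Record nualg (K : fieldType) := NuAlg {
  nu_car :> lmodType K;
  nu_mul : nu_car -> nu_car -> nu_car;
  nu_mulA : forall x y z, nu_mul x (nu_mul y z) = nu_mul (nu_mul x y) z;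
  nu_mulDl : forall x y z, nu_mul (x + y) z = nu_mul x z + nu_mul y z;
  nu_mulDr : forall x y z, nu_mul x (y + z) = nu_mul x y + nu_mul x z;
  nu_mulZl : forall (a : K) x y, nu_mul (a *: x) y = a *: nu_mul x y;
  nu_mulZr : forall (a : K) x y, nu_mul x (a *: y) = a *: nu_mul x y }.

Definition is_alg_hom (K : fieldType) (A B : nualg K) (f : A -> B) : Prop :=
  [/\ forall x y, f (x + y) = f x + f y,
      forall (a : K) x, f (a *: x) = a *: f x &
      forall x y, f (nu_mul x y) = nu_mul (f x) (f y)].

Definition is_algebra_involution (K : fieldType) (inv : K -> K) (A : nualg K)
    (star : A -> A) : Prop :=
  [/\ forall x y, star (x + y) = star x + star y,
      forall (a : K) x, star (a *: x) = inv a *: star x,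
      forall x y, star (nu_mul x y) = nu_mul (star y) (star x) &
      forall x, star (star x) = x].

(* Cohn-Leavitt families: images p v, s e, g e (= e^* ) of the         *)
(* generators satisfying (V),(E1),(E2),(CK1),(SCK2) for S.             *)
Definition CL_family (K : fieldType) (E : graph) (S : vertex E -> Prop)
    (A : nualg K) (p : vertex E -> A) (s g : edge E -> A) : Prop :=
  ((forall v, nu_mul (p v) (p v) = p v) /\
   (forall v w, v <> w -> nu_mul (p v) (p w) = 0)) /\
  (forall e, nu_mul (p (src e)) (s e) = s e /\ nu_mul (s e) (p (rng e)) = s e) /\
  (forall e, nu_mul (p (rng e)) (g e) = g e /\ nu_mul (g e) (p (src e)) = g e) /\
  ((forall e, nu_mul (g e) (s e) = p (rng e)) /\
   (forall e f, e <> f -> nu_mul (g e) (s f) = 0)) /\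
  (forall v, S v -> forall l, enumerates v l ->
     p v = \sum_(e <- l) nu_mul (s e) (g e)).

(* A (with generators p, s, g) is CL_K(E,S): the free K-algebra on
   E^0 u E^1 u (E^1)^* modulo the relations, i.e. the universal one. *)
Definition is_CL_algebra (K : fieldType) (E : graph) (S : vertex E -> Prop)
    (A : nualg K) (p : vertex E -> A) (s g : edge E -> A) : Prop :=
  CL_family S p s g /\
  forall (B : nualg K) (p' : vertex E -> B) (s' g' : edge E -> B),
    CL_family S p' s' g' ->
    exists f : A -> B,
      [/\ is_alg_hom f, (forall v, f (p v) = p' v),
          (forall e, f (s e) = s' e), (forall e, f (g e) = g' e) &
          forall f' : A -> B, is_alg_hom f' ->
            (forall v, f' (p v) = p' v) -> (forall e, f' (s e) = s' e) ->
            (forall e, f' (g e) = g' e) -> forall x, f' x = f x].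

Definition is_CL_star (K : fieldType) (inv : K -> K) (E : graph)
    (A : nualg K) (p : vertex E -> A) (s g : edge E -> A) (star : A -> A) : Prop :=
  [/\ is_algebra_involution inv star,
      (forall v, star (p v) = p v),
      (forall e, star (s e) = g e) &
      (forall e, star (g e) = s e)].

Definition is_L_algebra (K : fieldType) (F : graph) (A : nualg K)
    (p : vertex F -> A) (s g : edge F -> A) : Prop :=
  is_CL_algebra (@regular F) p s g.

Section ES.
Variables (E : graph) (S : vertex E -> Prop).

Definition RminusS (v : vertex E) : Prop := regular v /\ ~ S v.

Definition ES_vertex : Type := (vertex E + {v : vertex E | RminusS v})%type.
Definition ES_edge : Type := (edge E + {e : edge E | RminusS (rng e)})%type.

Definition ES_base (x : ES_edge) : edge E :=
  match x with inl e => e | inr e' => proj1_sig e' end.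

Definition ES_src (x : ES_edge) : ES_vertex := inl (src (ES_base x)).

Definition ES_rng (x : ES_edge) : ES_vertex :=
  match x with
  | inl e => inl (rng e)
  | inr e' => inr (exist _ (rng (proj1_sig e')) (proj2_sig e'))
  end.

Definition ES : graph := @Graph ES_vertex ES_edge ES_src ES_rng.
End ES.

Definition pdec (P : Prop) : {P} + {~ P} := excluded_middle_informative P.

(* a chosen enumeration of s^{-1}(v) (meaningful for regular v) *)
Definition enum_out (E : graph) (v : vertex E) : seq (edge E) :=
  epsilon (inhabits [::]) (fun l => enumerates v l).

Section Phi.
Variables (K : fieldType) (E : graph) (S : vertex E -> Prop) (A : nualg K)
  (p : vertex E -> A) (s g : edge E -> A) (star : A -> A).

Definition sum_out (v : vertex E) : A :=
  \sum_(e <- enum_out v) nu_mul (s e) (g e).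

Definition phiV (x : vertex (ES S)) : A :=
  match x with
  | inl v => if pdec (RminusS S v) then sum_out v else p v
  | inr v' => p (proj1_sig v') - sum_out (proj1_sig v')
  end.

Definition phiE (x : edge (ES S)) : A :=
  nu_mul (s (ES_base x)) (phiV (rng x)).

Definition phiG (x : edge (ES S)) : A := star (phiE x).
End Phi.

(* Main.v *)
Require Import Defs.
From HB Require Import structures.
From mathcomp Require Import all_boot all_order all_algebra.
From Stdlib Require Import ClassicalEpsilon Permutation ProofIrrelevance.
From Stdlib Require List FinFun.
Set Implicit Arguments. Unset Strict Implicit. Unset Printing Implicit Defensive.
Import GRing.Theory.
Local Open Scope ring_scope.

Local Notation "x ** y" := (nu_mul x y) (at level 40, left associativity).

Section Gen.
Variables (K : fieldType) (A : nualg K).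

Lemma nmul0r (x : A) : 0 ** x = 0.
Proof. by rewrite -(scale0r (0 : A)) nu_mulZl !scale0r. Qed.

Lemma nmulr0 (x : A) : x ** 0 = 0.
Proof. by rewrite -(scale0r (0 : A)) nu_mulZr !scale0r. Qed.

Lemma nmulNr (x y : A) : (- x) ** y = - (x ** y).
Proof. by rewrite -scaleN1r nu_mulZl scaleN1r. Qed.

Lemma nmulrN (x y : A) : x ** (- y) = - (x ** y).
Proof. by rewrite -scaleN1r nu_mulZr scaleN1r. Qed.

Lemma nmulBl (x y z : A) : (x - y) ** z = x ** z - y ** z.
Proof. by rewrite nu_mulDl nmulNr. Qed.

Lemma nmulBr (x y z : A) : x ** (y - z) = x ** y - x ** z.
Proof. by rewrite nu_mulDr nmulrN. Qed.

Lemma nmul_suml (T : Type) (L : seq T) (F : T -> A) (y : A) :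
  (\sum_(e <- L) F e) ** y = \sum_(e <- L) (F e ** y).
Proof.
elim: L => [|a L IH]; first by rewrite !big_nil nmul0r.
by rewrite !big_cons nu_mulDl IH.
Qed.

Lemma nmul_sumr (T : Type) (L : seq T) (F : T -> A) (y : A) :
  y ** (\sum_(e <- L) F e) = \sum_(e <- L) (y ** F e).
Proof.
elim: L => [|a L IH]; first by rewrite !big_nil nmulr0.
by rewrite !big_cons nu_mulDr IH.
Qed.

Lemma sum_eq_in (T : Type) (L : seq T) (F G : T -> A) :
  (forall e, List.In e L -> F e = G e) ->
  \sum_(e <- L) F e = \sum_(e <- L) G e.
Proof.
elim: L => [|a L IH] H; first by rewrite !big_nil.
rewrite !big_cons H /=; last by left.
by rewrite IH // => e He; apply: H; right.
Qed.

Lemma sum_zero (T : Type) (L : seq T) (F : T -> A) :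
  (forall e, List.In e L -> F e = 0) -> \sum_(e <- L) F e = 0.
Proof.
move=> H; rewrite (@sum_eq_in _ _ _ (fun _ => 0)) //.
by rewrite big1.
Qed.

Lemma sum_single (T : Type) (L : seq T) (F : T -> A) (e : T) :
  List.NoDup L -> List.In e L ->
  (forall f, List.In f L -> f <> e -> F f = 0) ->
  \sum_(f <- L) F f = F e.
Proof.
elim: L => [|a L IH] // ND He H; rewrite big_cons.
have /List.NoDup_cons_iff [naL ndL] := ND.
case: He => [Hae|HeL].
- subst a; rewrite sum_zero ?addr0 // => f Hf; apply: H; first by right.
  by move=> Hfe; subst f.
- rewrite H /=; [|by left|by move=> Hae; subst a].
  rewrite add0r IH // => f Hf; apply: H; by right.
Qed.

Lemma sum_perm (T : Type) (L L' : seq T) (F : T -> A) :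
  Permutation L L' -> \sum_(e <- L) F e = \sum_(e <- L') F e.
Proof.
elim=> [|x l l' _ IH|x y l|l l' l'' _ IH1 _ IH2] //.
- by rewrite !big_cons IH.
- by rewrite !big_cons addrCA.
- by rewrite IH1.
Qed.
End Gen.

Section Additive.
Variables (K : fieldType) (A C : nualg K) (h : A -> C).
Hypothesis Hadd : forall x y, h (x + y) = h x + h y.

Lemma add_map0 : h 0 = 0.
Proof.
have H := Hadd 0 0; rewrite addr0 in H.
by apply: (addrI (h 0)); rewrite -H addr0.
Qed.

Lemma add_mapN x : h (- x) = - h x.
Proof. by apply: (addrI (h x)); rewrite -Hadd !subrr add_map0. Qed.

Lemma add_mapB x y : h (x - y) = h x - h y.
Proof. by rewrite Hadd add_mapN. Qed.

Lemma add_map_sum (T : Type) (L : seq T) (F : T -> A) :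
  h (\sum_(e <- L) F e) = \sum_(e <- L) h (F e).
Proof.
elim: L => [|a L IH]; first by rewrite !big_nil add_map0.
by rewrite !big_cons Hadd IH.
Qed.
End Additive.



Section Fam.
Variables (K : fieldType) (E : graph) (S : vertex E -> Prop) (A : nualg K)
  (p : vertex E -> A) (s g : edge E -> A).
Hypothesis HF : CL_family S p s g.

Lemma F_pp v : p v ** p v = p v. Proof. by move: HF; rewrite /CL_family => - [[H _] _]. Qed.
Lemma F_pp0 v w : v <> w -> p v ** p w = 0. Proof. by move: HF; rewrite /CL_family => - [[_ H] _]; apply: H. Qed.
Lemma F_ps e : p (src e) ** s e = s e. Proof. by move: HF; rewrite /CL_family => - [_ [H _]]; case: (H e). Qed.
Lemma F_sp e : s e ** p (rng e) = s e. Proof. by move: HF; rewrite /CL_family => - [_ [H _]]; case: (H e). Qed.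
Lemma F_pg e : p (rng e) ** g e = g e. Proof. by move: HF; rewrite /CL_family => - [_ [_ [H _]]]; case: (H e). Qed.
Lemma F_gp e : g e ** p (src e) = g e. Proof. by move: HF; rewrite /CL_family => - [_ [_ [H _]]]; case: (H e). Qed.
Lemma F_gs e : g e ** s e = p (rng e). Proof. by move: HF; rewrite /CL_family => - [_ [_ [_ [[H _] _]]]]. Qed.
Lemma F_gs0 e f : e <> f -> g e ** s f = 0.
Proof. by move: HF; rewrite /CL_family => - [_ [_ [_ [[_ H] _]]]]; apply: H. Qed.
Lemma F_sck v : S v -> forall l, enumerates v l -> p v = \sum_(e <- l) s e ** g e.
Proof. by move: HF; rewrite /CL_family => - [_ [_ [_ [_ H]]]]; apply: H. Qed.

Lemma F_ps0 w e : w <> src e -> p w ** s e = 0.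
Proof. by move=> H; rewrite -F_ps nu_mulA F_pp0 // nmul0r. Qed.
Lemma F_sp0 e w : w <> rng e -> s e ** p w = 0.
Proof. by move=> H; rewrite -F_sp -nu_mulA F_pp0 1?eq_sym ?nmulr0 // => /esym. Qed.
Lemma F_gp0 e w : w <> src e -> g e ** p w = 0.
Proof. by move=> H; rewrite -F_gp -nu_mulA F_pp0 ?nmulr0 // => /esym. Qed.
Lemma F_pg0 w e : w <> rng e -> p w ** g e = 0.
Proof. by move=> H; rewrite -F_pg nu_mulA F_pp0 // nmul0r. Qed.
End Fam.

Section HomImage.
Variables (K : fieldType) (E : graph) (S : vertex E -> Prop) (A C : nualg K)
  (p : vertex E -> A) (s g : edge E -> A) (h : A -> C).

Lemma hom_CL : is_alg_hom h -> CL_family S p s g ->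
  CL_family S (fun v => h (p v)) (fun e => h (s e)) (fun e => h (g e)).
Proof.
move=> [Ha Hs Hm] HF.
have h0 : h 0 = 0 by apply: add_map0.
split; [split|split; [|split; [|split; [split|]]]].
- by move=> v; rewrite -Hm (F_pp HF).
- by move=> v w H; rewrite -Hm (F_pp0 HF).
- by move=> e; rewrite -!Hm (F_ps HF) (F_sp HF).
- by move=> e; rewrite -!Hm (F_pg HF) (F_gp HF).
- by move=> e; rewrite -Hm (F_gs HF).
- by move=> e f H; rewrite -Hm (F_gs0 HF).
- move=> v Sv l El; rewrite (F_sck HF Sv El) add_map_sum //.
  by apply: eq_bigr => e _; rewrite Hm.
Qed.

End HomImage.

Lemma CL_uniq (K : fieldType) (E : graph) (S : vertex E -> Prop) (A C : nualg K)
  (p : vertex E -> A) (s g : edge E -> A) : is_CL_algebra S p s g -> forall f1 f2 : A -> C,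
  is_alg_hom f1 -> is_alg_hom f2 ->
  (forall v, f1 (p v) = f2 (p v)) -> (forall e, f1 (s e) = f2 (s e)) ->
  (forall e, f1 (g e) = f2 (g e)) -> forall x, f1 x = f2 x.
Proof.
move=> [HF HU] f1 f2 h1 h2 Hp Hs Hg x.
have [f [_ _ _ _ U]] := HU C _ _ _ (hom_CL h1 HF).
by rewrite (U f1) // (U f2).
Qed.

Lemma id_hom (K : fieldType) (A : nualg K) : is_alg_hom (fun x : A => x).
Proof. by []. Qed.

Lemma comp_hom (K : fieldType) (A B C : nualg K) (f : A -> B) (h : B -> C) :
  is_alg_hom f -> is_alg_hom h -> is_alg_hom (fun x => h (f x)).
Proof.
move=> [f1 f2 f3] [h1 h2 h3]; split=> *; by rewrite ?f1 ?f2 ?f3 ?h1 ?h2 ?h3.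
Qed.

Lemma hom_star (K : fieldType) (inv : K -> K) (Hinv : involutive inv)
  (E : graph) (S : vertex E -> Prop) (A C : nualg K)
  (p : vertex E -> A) (s g : edge E -> A) (starA : A -> A) (starC : C -> C)
  (h : A -> C) :
  is_CL_algebra S p s g -> is_CL_star inv p s g starA ->
  is_algebra_involution inv starC -> is_alg_hom h ->
  (forall v, starC (h (p v)) = h (p v)) -> (forall e, starC (h (s e)) = h (g e)) ->
  forall x, h (starA x) = starC (h x).
Proof.
move=> HU [[a1 a2 a3 a4] ap as_ ag] [c1 c2 c3 c4] [h1 h2 h3] Hp Hs x.
suff H: forall x, starC (h (starA x)) = h x by rewrite -(H x) c4.
move=> y; apply: (CL_uniq HU (f1 := fun x => starC (h (starA x)))).
- split=> *; by rewrite ?a1 ?a2 ?a3 ?h1 ?h2 ?h3 ?c1 ?c2 ?c3 ?Hinv.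
- by split.
- by move=> v; rewrite ap Hp.
- by move=> e; rewrite as_ -Hs c4.
- by move=> e; rewrite ag Hs.
Qed.


Lemma cat_app T (l1 l2 : seq T) : l1 ++ l2 = List.app l1 l2.
Proof. by elim: l1 => //= a l ->. Qed.

Lemma map_List T U (f : T -> U) (l : seq T) : map f l = List.map f l.
Proof. by elim: l => //= a l ->. Qed.

Section ESlists.
Variables (E : graph) (S : vertex E -> Prop).

Fixpoint ob (L : seq (edge E)) : seq (ES_edge S) :=
  match L with
  | [::] => [::]
  | e :: L' => match pdec (RminusS S (rng e)) with
               | left H => inr (exist _ e H) :: ob L'
               | right _ => ob L'
               end
  end.

Definition l0 (L : seq (edge E)) : seq (ES_edge S) := map inl L ++ ob L.

Lemma In_ob_inl e L : ~ List.In (inl e) (ob L).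
Proof.
elim: L => [|a L IH] //=; case: (pdec _) => H //= [] // _.
Qed.

Lemma In_ob_inr x L : List.In (inr x) (ob L) <-> List.In (proj1_sig x) L.
Proof.
elim: L => [|a L IH] //=; case: (pdec _) => H /=.
- split.
  + by case=> [[<-]|/IH]; [left|right].
  + case=> [Ha|/IH]; last by right.
    left; clear IH; case: x Ha => x Hx /= Ha; subst a.
    by rewrite (proof_irrelevance _ H Hx).
- rewrite IH; split; first by right.
  by case=> // Ha; exfalso; apply: H; rewrite Ha; clear IH Ha; case: x.
Qed.

Lemma NoDup_ob L : List.NoDup L -> List.NoDup (ob L).
Proof.
elim: L => [|a L IH] /=; first by constructor.
move/List.NoDup_cons_iff=> [naL ndL]; case: (pdec _) => H; last exact: IH.
constructor; last exact: IH.
by move/In_ob_inr.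
Qed.

Lemma In_map_inl_inl e L :
  List.In (inl e : ES_edge S) (map inl L) <-> List.In e L.
Proof.
elim: L => [|a L IH] //=; rewrite IH; split; case=> H; try by [right].
- by left; case: H.
- by left; rewrite H.
Qed.

Lemma In_map_inl_inr x L :
  ~ List.In (inr x : ES_edge S) (map inl L).
Proof. by elim: L => [|a L IH] //= [] //. Qed.

Lemma In_l0 f L : List.In f (l0 L) <-> List.In (ES_base f) L.
Proof.
rewrite /l0 cat_app List.in_app_iff.
case: f => [e|x] /=.
- rewrite In_map_inl_inl; split; [case=> [//|/In_ob_inl []]|by left].
- split; first by case=> [/In_map_inl_inr []|/In_ob_inr].
  by move/In_ob_inr; right.
Qed.

Lemma NoDup_l0 L : List.NoDup L -> List.NoDup (l0 L).
Proof.
move=> ND; rewrite /l0 cat_app; apply: List.NoDup_app.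
- rewrite map_List; apply: FinFun.Injective_map_NoDup => // x y []; done.
- exact: (NoDup_ob ND).
- move=> [e|x] H; first exact: In_ob_inl.
  by move: H => /In_map_inl_inr.
Qed.

Lemma enum_l0 v L : enumerates v L -> enumerates (E:=ES S) (inl v) (l0 L).
Proof.
move=> [ND H]; split; first exact: NoDup_l0.
move=> f; rewrite In_l0 H /= /ES_src; split; first by move=> ->.
by case.
Qed.

Lemma regular_l0 v : regular v -> regular (E:=ES S) (inl v).
Proof.
move=> [L [ne HL]]; exists (l0 L); split; last exact: enum_l0.
by rewrite /l0; case: L ne {HL}.
Qed.

Fixpoint lefts (l : seq (ES_edge S)) : seq (edge E) :=
  match l with
  | [::] => [::]
  | inl e :: l' => e :: lefts l'
  | inr _ :: l' => lefts l'
  end.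

Lemma In_lefts e l : List.In e (lefts l) <-> List.In (inl e) l.
Proof.
elim: l => [|[a|a] l IH] //=; rewrite IH; split.
- by case=> H; [left; rewrite H|right].
- by case=> H; [left; case: H|right].
- by move=> H; right.
- by case=> H //; case: H.
Qed.

Lemma NoDup_lefts l : List.NoDup l -> List.NoDup (lefts l).
Proof.
elim: l => [|[a|a] l IH] /=; first by constructor.
- move/List.NoDup_cons_iff=> [nal ndl]; constructor; last exact: IH.
  by move/In_lefts.
- by move/List.NoDup_cons_iff=> [_ ndl]; apply: IH.
Qed.

Lemma regular_inl v : regular (E:=ES S) (inl v) -> regular v.
Proof.
move=> [l [ne [ND H]]]; exists (lefts l); split; last first.
  split; first exact: NoDup_lefts.
  by move=> e; rewrite In_lefts H /= /ES_src; split; [case|move=> ->].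
case: l ne ND H => [|f l] // _ _ H.
have Hf : src (ES_base f) = v by case: (proj1 (H f) (or_introl erefl)).
have : List.In (inl (ES_base f)) (f :: l) by apply/H; rewrite /= /ES_src /= Hf.
by move/In_lefts; case: (lefts _).
Qed.

Lemma not_regular_inr x : ~ regular (E:=ES S) (inr x).
Proof.
move=> [[|f l] [ne [ND H]]] //.
by have := proj1 (H f) (or_introl erefl).
Qed.

Definition obt (V : zmodType) (F : ES_edge S -> V) (e : edge E) : V :=
  match pdec (RminusS S (rng e)) with
  | left H => F (inr (exist _ e H))
  | right _ => 0
  end.

Lemma sum_l0 (V : zmodType) (F : ES_edge S -> V) L :
  \sum_(f <- l0 L) F f = \sum_(e <- L) (F (inl e) + obt F e).
Proof.
rewrite /l0 big_cat big_map big_split /=; congr (_ + _).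
elim: L => [|a L IH]; first by rewrite !big_nil.
rewrite big_cons /obt /=; case: (pdec _) => H.
- by rewrite big_cons IH.
- by rewrite IH add0r.
Qed.
End ESlists.



Lemma enum_spec (E : graph) (v : vertex E) : regular v -> enumerates v (enum_out v).
Proof.
move=> [l [_ H]]; rewrite /enum_out.
exact: (epsilon_spec (inhabits [::]) (fun l => enumerates v l) (ex_intro _ l H)).
Qed.

Definition bv (E : graph) (S : vertex E -> Prop) (x : ES_vertex S) : vertex E :=
  match x with inl v => v | inr v' => sval v' end.

Lemma nmul4 (K : fieldType) (A : nualg K) (a b c d : A) :
  (a ** b) ** (c ** d) = a ** ((b ** c) ** d).
Proof. by rewrite !nu_mulA. Qed.

Lemma rng_ne (E : graph) (S : vertex E -> Prop) (f f' : edge (ES S)) :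
  f <> f' -> ES_base f = ES_base f' -> ES_rng f <> ES_rng f'.
Proof.
case: f f' => [e|[e He]] [e'|[e' He']] //= Hne Hb Hr.
- by subst e'; apply: Hne.
- subst e'; apply: Hne; by rewrite (proof_irrelevance _ He He').
Qed.

Section PhiA.
Variables (K : fieldType) (inv : K -> K) (E : graph) (S : vertex E -> Prop).
Hypothesis HS : forall v, S v -> regular v.
Variables (A : nualg K) (p : vertex E -> A) (s g : edge E -> A) (star : A -> A).
Hypothesis HF : CL_family S p s g.
Hypothesis Hst : is_CL_star inv p s g star.

Local Notation q v := (sum_out s g v).
Local Notation Phi := (phiV (S:=S) p s g).

Lemma st_add x y : star (x + y) = star x + star y.
Proof. by case: Hst => [[]]. Qed.
Lemma st_mul x y : star (x ** y) = star y ** star x.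
Proof. by case: Hst => [[]]. Qed.
Lemma st_p v : star (p v) = p v. Proof. by case: Hst. Qed.
Lemma st_s e : star (s e) = g e. Proof. by case: Hst. Qed.
Lemma st_g e : star (g e) = s e. Proof. by case: Hst. Qed.

Lemma q_s_eq v e : regular v -> src e = v -> q v ** s e = s e.
Proof.
move=> Rv He; have [ND HL] := enum_spec Rv.
rewrite /sum_out nmul_suml (sum_single (e:=e)) //.
- by rewrite -nu_mulA (F_gs HF) (F_sp HF).
- by apply/HL.
- by move=> f _ Hfe; rewrite -nu_mulA (F_gs0 HF) ?nmulr0.
Qed.

Lemma q_s_ne v e : regular v -> src e <> v -> q v ** s e = 0.
Proof.
move=> Rv He; have [ND HL] := enum_spec Rv.
rewrite /sum_out nmul_suml sum_zero // => f /HL Hf.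
rewrite -nu_mulA (F_gs0 HF) ?nmulr0 // => Hfe; apply: He; by rewrite -Hfe.
Qed.

Lemma g_q_eq v e : regular v -> src e = v -> g e ** q v = g e.
Proof.
move=> Rv He; have [ND HL] := enum_spec Rv.
rewrite /sum_out nmul_sumr (sum_single (e:=e)) //.
- by rewrite nu_mulA (F_gs HF) (F_pg HF).
- by apply/HL.
- by move=> f _ Hfe; rewrite nu_mulA (F_gs0 HF) ?nmul0r // => /esym.
Qed.

Lemma g_q_ne v e : regular v -> src e <> v -> g e ** q v = 0.
Proof.
move=> Rv He; have [ND HL] := enum_spec Rv.
rewrite /sum_out nmul_sumr sum_zero // => f /HL Hf.
rewrite nu_mulA (F_gs0 HF) ?nmul0r // => Hfe; apply: He; by rewrite Hfe.
Qed.

Lemma p_q v : regular v -> p v ** q v = q v.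
Proof.
move=> Rv; have [ND HL] := enum_spec Rv.
rewrite /sum_out nmul_sumr; apply: sum_eq_in => f /HL Hf.
by rewrite nu_mulA -Hf (F_ps HF).
Qed.

Lemma p_q_ne v w : regular v -> w <> v -> p w ** q v = 0.
Proof.
move=> Rv Hw; have [ND HL] := enum_spec Rv.
rewrite /sum_out nmul_sumr sum_zero // => f /HL Hf.
by rewrite nu_mulA (F_ps0 HF) ?nmul0r // Hf.
Qed.

Lemma q_p v : regular v -> q v ** p v = q v.
Proof.
move=> Rv; have [ND HL] := enum_spec Rv.
rewrite /sum_out nmul_suml; apply: sum_eq_in => f /HL Hf.
by rewrite -nu_mulA -Hf (F_gp HF).
Qed.

Lemma q_p_ne v w : regular v -> w <> v -> q v ** p w = 0.
Proof.
move=> Rv Hw; have [ND HL] := enum_spec Rv.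
rewrite /sum_out nmul_suml sum_zero // => f /HL Hf.
by rewrite -nu_mulA (F_gp0 HF) ?nmulr0 // Hf.
Qed.

Lemma q_q v : regular v -> q v ** q v = q v.
Proof.
move=> Rv; have [ND HL] := enum_spec Rv.
rewrite {1}/sum_out nmul_suml /sum_out; apply: sum_eq_in => f /HL Hf.
by rewrite -nu_mulA g_q_eq.
Qed.

Lemma star_q v : star (q v) = q v.
Proof.
rewrite /sum_out (add_map_sum st_add); apply: eq_bigr => f _.
by rewrite st_mul st_s st_g.
Qed.

Lemma Phi_inl_R v : RminusS S v -> Phi (inl v) = q v.
Proof. by move=> H /=; case: (pdec _). Qed.

Lemma Phi_inl_N v : ~ RminusS S v -> Phi (inl v) = p v.
Proof. by move=> H /=; case: (pdec _). Qed.

Lemma Phi_inl_reg v : regular v -> Phi (inl v) = q v.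
Proof.
move=> Rv /=; case: (pdec _) => // H.
case: (pdec (S v)) => [Sv|nS]; last by exfalso; apply: H.
exact: (F_sck HF Sv (enum_spec Rv)).
Qed.

Lemma Phi_pl x : p (bv x) ** Phi x = Phi x.
Proof.
case: x => [v|[v Hv]] /=.
- case: (pdec _) => H; [exact: p_q (proj1 H)|exact: (F_pp HF)].
- by rewrite nmulBr (F_pp HF) (p_q (proj1 Hv)).
Qed.

Lemma Phi_pr x : Phi x ** p (bv x) = Phi x.
Proof.
case: x => [v|[v Hv]] /=.
- case: (pdec _) => H; [exact: q_p (proj1 H)|exact: (F_pp HF)].
- by rewrite nmulBl (F_pp HF) (q_p (proj1 Hv)).
Qed.

Lemma Phi_pl0 x w : w <> bv x -> p w ** Phi x = 0.
Proof. by move=> H; rewrite -Phi_pl nu_mulA (F_pp0 HF) // nmul0r. Qed.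

Lemma Phi_pr0 x w : w <> bv x -> Phi x ** p w = 0.
Proof. by move=> H; rewrite -Phi_pr -nu_mulA (F_pp0 HF) ?nmulr0 // => /esym. Qed.

Lemma Phi_idem x : Phi x ** Phi x = Phi x.
Proof.
case: x => [v|[v Hv]] /=.
- case: (pdec _) => H; [exact: q_q (proj1 H)|exact: (F_pp HF)].
- have Rv := proj1 Hv.
  by rewrite nmulBl !nmulBr (F_pp HF) p_q // q_p // q_q // subrr subr0.
Qed.

Lemma Phi_orth x y : x <> y -> Phi x ** Phi y = 0.
Proof.
move=> Hxy; case: (pdec (bv x = bv y)) => Hb; last first.
  by rewrite -(Phi_pr x) -nu_mulA Phi_pl0 ?nmulr0.
case: x y Hxy Hb => [v|[v Hv]] [w|[w Hw]] Hxy Hb; rewrite /= in Hb; subst.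
- by case: Hxy.
- rewrite (Phi_inl_R Hw) /=; have Rw := proj1 Hw.
  by rewrite nmulBr q_p // q_q // subrr.
- rewrite (Phi_inl_R Hv) /=; have Rv := proj1 Hv.
  by rewrite nmulBl p_q // q_q // subrr.
- by exfalso; apply: Hxy; rewrite (proof_irrelevance _ Hv Hw).
Qed.

Lemma Phi_star x : star (Phi x) = Phi x.
Proof.
case: x => [v|[v Hv]] /=.
- by case: (pdec _) => H; [exact: star_q|exact: st_p].
- by rewrite (add_mapB st_add) st_p star_q.
Qed.

Local Notation PE := (phiE (S:=S) p s g).
Local Notation PG := (phiG (S:=S) p s g star).

Lemma PE_def (f : edge (ES S)) : PE f = s (ES_base f) ** Phi (ES_rng f).
Proof. by []. Qed.

Lemma PG_def (f : edge (ES S)) : PG f = Phi (ES_rng f) ** g (ES_base f).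
Proof. by rewrite /phiG PE_def st_mul Phi_star st_s. Qed.

Lemma bv_rng (f : edge (ES S)) : bv (ES_rng f) = rng (ES_base f).
Proof. by case: f. Qed.

Lemma Phi_src_s (f : edge (ES S)) : Phi (ES_src f) ** s (ES_base f) = s (ES_base f).
Proof.
rewrite /ES_src /=; case: (pdec _) => H.
- exact: q_s_eq (proj1 H) _.
- exact: (F_ps HF).
Qed.

Lemma g_Phi_src (f : edge (ES S)) : g (ES_base f) ** Phi (ES_src f) = g (ES_base f).
Proof.
rewrite /ES_src /=; case: (pdec _) => H.
- exact: g_q_eq (proj1 H) _.
- exact: (F_gp HF).
Qed.

Lemma PEG (f : edge (ES S)) : PE f ** PG f = s (ES_base f) ** Phi (ES_rng f) ** g (ES_base f).
Proof. by rewrite PE_def PG_def nmul4 Phi_idem nu_mulA. Qed.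

Lemma phi_family : CL_family (@regular (ES S)) Phi PE PG.
Proof.
split; [split|split; [|split; [|split; [split|]]]].
- exact: Phi_idem.
- exact: Phi_orth.
- move=> f; rewrite PE_def /=; split.
  + by rewrite nu_mulA Phi_src_s.
  + by rewrite -nu_mulA Phi_idem.
- move=> f; rewrite PG_def /=; split.
  + by rewrite nu_mulA Phi_idem.
  + by rewrite -nu_mulA g_Phi_src.
- move=> f; rewrite PE_def PG_def /= nmul4 (F_gs HF) -bv_rng Phi_pl.
  exact: Phi_idem.
- move=> f f' Hne; rewrite PE_def PG_def /= nmul4.
  case: (pdec (ES_base f = ES_base f')) => Hb; last first.
    by rewrite (F_gs0 HF) // nmul0r nmulr0.
  rewrite -Hb (F_gs HF) Hb -bv_rng Phi_pl.
  exact/Phi_orth/rng_ne.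
- case=> [v|x'] Rx l El; last by exfalso; apply: (not_regular_inr Rx).
  have Rv := regular_inl Rx.
  have ELv := enum_spec Rv.
  rewrite (Phi_inl_reg Rv).
  have Hperm : Permutation l (l0 S (enum_out v)).
    apply: NoDup_Permutation; first by case: El.
      by case: (enum_l0 S ELv).
    move=> f; rewrite (proj2 El f); symmetry; exact: (proj2 (enum_l0 S ELv) f).
  rewrite (sum_perm _ Hperm) sum_l0 /sum_out; apply: eq_bigr => e _.
  rewrite PEG /obt /=; case: (pdec _) => H.
    rewrite /= PEG /= -nu_mulDl -nu_mulDr addrC subrK.
    by rewrite (F_sp HF).
  + by rewrite /= addr0 (F_sp HF).
Qed.
End PhiA.



Section PsiB.
Variables (K : fieldType) (inv : K -> K) (E : graph) (S : vertex E -> Prop).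
Hypothesis HS : forall v, S v -> regular v.
Variables (B : nualg K) (pB : vertex (ES S) -> B) (sB gB : edge (ES S) -> B)
  (starB : B -> B).
Hypothesis HFB : CL_family (@regular (ES S)) pB sB gB.
Hypothesis HstB : is_CL_star inv pB sB gB starB.

Definition PP (v : vertex E) : B :=
  match pdec (RminusS S v) with
  | left H => pB (inl v) + pB (inr (exist _ v H))
  | right _ => pB (inl v)
  end.

Definition Sg (e : edge E) : B :=
  match pdec (RminusS S (rng e)) with
  | left H => sB (inl e) + sB (inr (exist (fun e => RminusS S (rng e)) e H))
  | right _ => sB (inl e)
  end.

Definition Gg (e : edge E) : B :=
  match pdec (RminusS S (rng e)) with
  | left H => gB (inl e) + gB (inr (exist (fun e => RminusS S (rng e)) e H))
  | right _ => gB (inl e)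
  end.

Lemma stB_add x y : starB (x + y) = starB x + starB y.
Proof. by case: HstB => [[]]. Qed.
Lemma stB_mul x y : starB (x ** y) = starB y ** starB x.
Proof. by case: HstB => [[]]. Qed.
Lemma stB_p v : starB (pB v) = pB v. Proof. by case: HstB. Qed.
Lemma stB_s e : starB (sB e) = gB e. Proof. by case: HstB. Qed.
Lemma stB_g e : starB (gB e) = sB e. Proof. by case: HstB. Qed.

Lemma ppB0 (x y : vertex (ES S)) : bv x <> bv y -> pB x ** pB y = 0.
Proof. move=> H; apply: (F_pp0 HFB) => Hxy; apply: H; by rewrite Hxy. Qed.

Lemma P_idem v : PP v ** PP v = PP v.
Proof.
rewrite /PP; case: (pdec _) => H; last exact: (F_pp HFB).
rewrite !nu_mulDl !nu_mulDr !(F_pp HFB) !(F_pp0 HFB) //.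
by rewrite addr0 add0r.
Qed.

Lemma P_orth v w : v <> w -> PP v ** PP w = 0.
Proof.
move=> Hvw; rewrite /PP.
case: (pdec (RminusS S v)) => Hv; case: (pdec (RminusS S w)) => Hw;
  rewrite ?nu_mulDl ?nu_mulDr !ppB0 // ?addr0 //.
Qed.

Lemma P_star v : starB (PP v) = PP v.
Proof. by rewrite /PP; case: (pdec _) => H; rewrite ?stB_add !stB_p. Qed.

Lemma Sg_star e : starB (Sg e) = Gg e.
Proof. by rewrite /Sg /Gg; case: (pdec _) => H; rewrite ?stB_add !stB_s. Qed.

Lemma P_s e (f : edge (ES S)) : ES_base f = e -> PP (src e) ** sB f = sB f.
Proof.
move=> <-; rewrite /PP; case: (pdec _) => H.
- rewrite nu_mulDl (F_ps HFB f) (F_ps0 HFB) ?addr0 //.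
- exact: (F_ps HFB f).
Qed.

Lemma gs0b (x y : edge (ES S)) : ES_base x <> ES_base y -> gB x ** sB y = 0.
Proof. move=> H; apply: (F_gs0 HFB) => Hxy; apply: H; by rewrite Hxy. Qed.

Lemma sg0 (x y : edge (ES S)) : ES_rng x <> ES_rng y -> sB x ** gB y = 0.
Proof.
move=> H; rewrite -(F_sp HFB x) -(F_pg HFB y) nmul4 (F_pp0 HFB) //.
by rewrite nmul0r nmulr0.
Qed.

Lemma key_sum v L : regular v -> enumerates v L ->
  \sum_(e <- L) Sg e ** Gg e = pB (inl v).
Proof.
move=> Rv EL.
rewrite (F_sck HFB (regular_l0 S Rv) (enum_l0 S EL)) sum_l0.
apply: eq_bigr => e _; rewrite /obt /Sg /Gg; case: (pdec _) => H.
- rewrite !nu_mulDl !nu_mulDr (sg0 (x:=inl e) (y:=inr _)) //.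
  rewrite (sg0 (x:=inr _) (y:=inl e)) //.
  by rewrite addr0 add0r.
- by rewrite addr0.
Qed.

Lemma psi_family : CL_family S PP Sg Gg.
Proof.
have E1a : forall e, PP (src e) ** Sg e = Sg e.
  move=> e; rewrite /Sg; case: (pdec _) => H.
  - by rewrite nu_mulDr !(P_s (e:=e)).
  - by rewrite (P_s (e:=e)).
have E1b : forall e, Sg e ** PP (rng e) = Sg e.
  move=> e; rewrite /Sg /PP; case: (pdec _) => H.
  - rewrite !nu_mulDl !nu_mulDr (F_sp HFB (inl e)).
    rewrite (F_sp HFB (inr (exist (fun e => RminusS S (rng e)) e H))).
    by rewrite !(F_sp0 HFB) // addr0 add0r.
  - exact: (F_sp HFB (inl e)).
split; [split|split; [|split; [|split; [split|]]]].
- exact: P_idem.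
- exact: P_orth.
- by move=> e; rewrite E1a E1b.
- move=> e; split.
  + by rewrite -Sg_star -P_star -stB_mul E1b.
  + by rewrite -Sg_star -P_star -stB_mul E1a.
- move=> e; rewrite /Sg /Gg /PP; case: (pdec _) => H.
  + rewrite !nu_mulDl !nu_mulDr !(F_gs HFB) !(F_gs0 HFB) //.
    by rewrite addr0 add0r.
  + exact: (F_gs HFB (inl e)).
- move=> e f Hef; rewrite /Sg /Gg.
  case: (pdec (RminusS S (rng e))) => He; case: (pdec (RminusS S (rng f))) => Hf;
    rewrite ?nu_mulDl ?nu_mulDr !gs0b // ?addr0 //.
- move=> v Sv l El.
  have -> : PP v = pB (inl v).
    by rewrite /PP; case: (pdec _) => // -[].
  by rewrite (key_sum (HS Sv) El).
Qed.
End PsiB.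



Theorem lemma4p8 (K : fieldType) (inv : {rmorphism K -> K})
  (Hinv : involutive inv)
  (E : graph) (S : vertex E -> Prop) (HS : forall v, S v -> regular v)
  (* CL_K(E,S) with its generators and involution *)
  (A : nualg K) (pA : vertex E -> A) (sA gA : edge E -> A) (starA : A -> A)
  (HA : is_CL_algebra S pA sA gA) (HstarA : is_CL_star inv pA sA gA starA)
  (* L_K(E_S) with its generators and involution *)
  (B : nualg K) (pB : vertex (ES S) -> B) (sB gB : edge (ES S) -> B)
  (starB : B -> B)
  (HB : is_L_algebra pB sB gB) (HstarB : is_CL_star inv pB sB gB starB) :
  exists phi : B -> A,
    [/\ is_alg_hom phi, bijective phi &
        forall x, phi (starB x) = starA (phi x)] /\
    [/\ (forall v, phi (pB v) = phiV pA sA gA v),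
        (forall e, phi (sB e) = phiE pA sA gA e) &
        (forall e, phi (gB e) = phiG pA sA gA starA e)] /\
    forall psi : B -> A, is_alg_hom psi ->
      (forall v, psi (pB v) = phiV pA sA gA v) ->
      (forall e, psi (sB e) = phiE pA sA gA e) ->
      (forall e, psi (gB e) = phiG pA sA gA starA e) ->
      forall x, psi x = phi x.
Proof.
have FA := proj1 HA.
have FB := proj1 HB.
have [phi [phih phip phis phig _]] := proj2 HB A _ _ _ (phi_family FA HstarA).
have [psi [psih psip psis psig _]] := proj2 HA B _ _ _ (psi_family HS FB HstarB).
have phiadd := (let: And3 h _ _ := phih in h).
have psiadd := (let: And3 h _ _ := psih in h).
have psimul := (let: And3 _ _ h := psih in h).
have invA := (let: And4 h _ _ _ := HstarA in h).
have invB := (let: And4 h _ _ _ := HstarB in h).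
have phistar : forall x, phi (starB x) = starA (phi x).
  apply: (hom_star Hinv HB HstarB invA phih).
  - by move=> v; rewrite phip (Phi_star HstarA).
  - by move=> e; rewrite phis phig.
have psistar : forall x, psi (starA x) = starB (psi x).
  apply: (hom_star Hinv HA HstarA invB psih).
  - by move=> v; rewrite psip (P_star HstarB).
  - by move=> e; rewrite psis psig (Sg_star HstarB).
have phiSg : forall e, phi (Sg sB e) = sA e.
  move=> e; rewrite /Sg; case: (pdec _) => H.
  - rewrite phiadd !phis !PE_def -nu_mulDr.
    rewrite (Phi_inl_R pA sA gA H) /= addrC subrK.
    exact: (F_sp FA).
  - by rewrite phis PE_def (Phi_inl_N pA sA gA H) (F_sp FA).
have phi_psi : forall x, phi (psi x) = x.
  apply: (CL_uniq HA (f1 := fun x => phi (psi x)) (f2 := id)).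
  - exact: comp_hom.
  - exact: id_hom.
  - move=> v; rewrite psip /PP; case: (pdec _) => H.
    + by rewrite phiadd !phip (Phi_inl_R pA sA gA H) /= addrC subrK.
    + by rewrite phip (Phi_inl_N pA sA gA H).
  - by move=> e; rewrite psis phiSg.
  - move=> e; rewrite psig -(Sg_star HstarB) phistar phiSg.
    by case: HstarA.
have psiPhi : forall x, psi (phiV pA sA gA x) = pB x.
  have psiq : forall v, regular v -> psi (sum_out sA gA v) = pB (inl v).
    move=> v Rv; rewrite /sum_out (add_map_sum psiadd).
    rewrite -(key_sum FB Rv (enum_spec Rv)); apply: eq_bigr => e _.
    by rewrite psimul psis psig.
  case=> [v|[v Hv]].
  - case: (pdec (RminusS S v)) => H.
    + by rewrite (Phi_inl_R pA sA gA H) psiq //; case: H.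
    + rewrite (Phi_inl_N pA sA gA H) psip /PP; case: (pdec _) => // H'.
  - rewrite /= (add_mapB psiadd) psip psiq; last by case: Hv.
    rewrite /PP.
    case: (pdec _) => H; last by [].
    by rewrite (proof_irrelevance _ H Hv) addrC addKr.
have psi_phi : forall x, psi (phi x) = x.
  have psi_phi_s : forall f, psi (phi (sB f)) = sB f.
    move=> f; rewrite phis PE_def psimul psis psiPhi.
    case: f => [e|[e He]] /=; rewrite /Sg; case: (pdec _) => H.
    - rewrite nu_mulDl (F_sp FB (inl e)) (F_sp0 FB) ?addr0 //.
    - exact: (F_sp FB (inl e)).
    - rewrite (proof_irrelevance _ H He) nu_mulDl (F_sp0 FB) ?add0r //.
      exact: (F_sp FB (inr _)).
    - by [].
  apply: (CL_uniq HB (f1 := fun x => psi (phi x)) (f2 := id)).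
  - exact: comp_hom.
  - exact: id_hom.
  - by move=> x; rewrite phip psiPhi.
  - exact: psi_phi_s.
  - move=> f; rewrite phig /phiG -phis psistar psi_phi_s.
    by case: HstarB.
exists phi; split; [split|split; [by split|]] => //.
- exact: (Bijective psi_phi phi_psi).
- move=> psi' h' H1 H2 H3; apply: (CL_uniq HB h' phih).
  + by move=> v; rewrite H1 phip.
  + by move=> v; rewrite H2 phis.
  + by move=> v; rewrite H3 phig.
Qed.
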